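(* (i) No strongly hyperhyperimmune set has upper density $1$. (ii) For every real $\epsilon>0$ there is a strongly hyperhyperimmune set with upper density at least $1-\epsilon$.
   Context: For $S\subseteq\omega$ and $n>0$, $\rho_n(S)=|S\cap[0,n)|/n$ and the upper density is $\limsup_n\rho_n(S)$. $W_e$ denotes the $e$th c.e. set. An infinite set $A\subseteq\omega$ is strongly hyperhyperimmune if there is no computable function $f$ such that the sets $W_{f(0)},W_{f(1)},\dots$ are pairwise disjoint and all intersect $A$. *)

(* Defs.v *)
From Stdlib Require Import Reals Arith List Cantor.
From Coquelicot Require Import Coquelicot.
Import ListNotations.
Local Open Scope nat_scope.

(* Model of computation: Minsky register machines with a standard     *)
(* Goedel numbering (via Cantor pairing).                             *)

Inductive instr : Type :=
| Inc (r : nat)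
| JzDec (r j : nat).

Definition program := list instr.

Definition decode_instr (h : nat) : instr :=
  let (a, b) := Cantor.of_nat h in
  match a with
  | 0 => Inc b
  | S _ => let (r, j) := Cantor.of_nat b in JzDec r j
  end.

Fixpoint decode_list (fuel n : nat) : program :=
  match fuel with
  | 0 => []
  | S f => match n with
           | 0 => []
           | S m => let (h, t) := Cantor.of_nat m in decode_instr h :: decode_list f t
           end
  end.

(* The e-th program (fuel e suffices since Cantor components are <= the code). *)
Definition prog_of (e : nat) : program := decode_list e e.

Record config := mkConfig { pc : nat; regs : nat -> nat }.

Definition upd (g : nat -> nat) (r v : nat) : nat -> nat :=
  fun k => if Nat.eqb k r then v else g k.

Definition step (p : program) (c : config) : config :=
  match nth_error p (pc c) with
  | None => c
  | Some (Inc r) => mkConfig (S (pc c)) (upd (regs c) r (S (regs c r)))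
  | Some (JzDec r j) =>
      match regs c r with
      | 0 => mkConfig j (regs c)
      | S v => mkConfig (S (pc c)) (upd (regs c) r v)
      end
  end.

Fixpoint run (p : program) (n : nat) (c : config) : config :=
  match n with 0 => c | S k => run p k (step p c) end.

Definition init (x : nat) : config := mkConfig 0 (fun r => if Nat.eqb r 0 then x else 0).

Definition halted (p : program) (c : config) : Prop := length p <= pc c.

Definition halts (e x : nat) : Prop :=
  exists n, halted (prog_of e) (run (prog_of e) n (init x)).

Definition computes (e x y : nat) : Prop :=
  exists n, halted (prog_of e) (run (prog_of e) n (init x)) /\
            regs (run (prog_of e) n (init x)) 0 = y.

Definition W (e : nat) (x : nat) : Prop := halts e x.

Definition computable (f : nat -> nat) : Prop :=
  exists e, forall x, computes e x (f x).

Definition infinite_set (A : nat -> bool) : Prop :=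
  forall m, exists n, m <= n /\ A n = true.

Definition strongly_hhi (A : nat -> bool) : Prop :=
  infinite_set A /\
  ~ exists f : nat -> nat,
      computable f /\
      (forall i j x, i <> j -> W (f i) x -> W (f j) x -> False) /\
      (forall i, exists x, W (f i) x /\ A x = true).

Fixpoint count_below (X : nat -> bool) (n : nat) : nat :=
  match n with
  | 0 => 0
  | S k => count_below X k + (if X k then 1 else 0)
  end.

Local Open Scope R_scope.
Definition rho (X : nat -> bool) (n : nat) : R := INR (count_below X n) / INR n.

Definition upper_density (X : nat -> bool) : Rbar :=
  LimSup_seq (fun n => rho X (S n)).

(* Main.v *)
Require Import Defs.
From Stdlib Require Import Reals Lra Lia Arith List Classical ClassicalEpsilon FunctionalExtensionality.
From Coquelicot Require Import Coquelicot.
Open Scope bool_scope. Open Scope nat_scope.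

Lemma count_le X n : count_below X n <= n.
Proof. induction n; simpl; [lia|destruct (X n); lia]. Qed.

Lemma count_ext X Y n : (forall x, x < n -> X x = Y x) -> count_below X n = count_below Y n.
Proof. induction n; intros H; simpl; auto. rewrite IHn by (intros; apply H; lia). rewrite H by lia. auto. Qed.

Lemma count_or X Y n : count_below (fun x => X x || Y x) n <= count_below X n + count_below Y n.
Proof. induction n; simpl; auto. destruct (X n), (Y n); simpl; lia. Qed.

Lemma count_compl X n : count_below X n + count_below (fun x => negb (X x)) n = n.
Proof. induction n; simpl; auto. destruct (X n); simpl; lia. Qed.

Lemma count_pos X N : (exists x, x < N /\ X x = true) -> 1 <= count_below X N.
Proof.
  induction N; intros [x [H1 H2]]; [lia|]. simpl.
  destruct (Nat.eq_dec x N). subst. rewrite H2. lia.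
  assert (1 <= count_below X N) by (apply IHN; exists x; split; auto; lia). lia.
Qed.

Lemma count_bound_below X L N : (forall n, L <= n -> n < N -> X n = false) -> count_below X N <= L.
Proof.
  induction N; intros H; simpl; [lia|].
  destruct (le_lt_dec L N).
  - rewrite H by lia. rewrite Nat.add_0_r. apply IHN. intros; apply H; lia.
  - pose proof (count_le X N). destruct (X N); lia.
Qed.

Lemma count_mono X n m : n <= m -> count_below X n <= count_below X m.
Proof. induction 1; simpl; auto. lia. Qed.

Lemma count_sub X Y n : (forall x, X x = true -> Y x = true) -> count_below X n <= count_below Y n.
Proof. intros H; induction n; simpl; auto. destruct (X n) eqn:E; [rewrite (H _ E)|destruct (Y n)]; lia. Qed.

Fixpoint nsum (f : nat -> nat) K := match K with 0 => 0 | S k => nsum f k + f k end.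

Lemma nsum_lin a b f g K : nsum (fun i => a * f i + b * g i) K = a * nsum f K + b * nsum g K.
Proof. induction K; simpl; lia. Qed.

Lemma nsum_ge f c K : (forall i, i < K -> c <= f i) -> K * c <= nsum f K.
Proof. induction K; intros H; simpl; auto. assert (c <= f K) by (apply H; lia).
  assert (K * c <= nsum f K) by (apply IHK; intros; apply H; lia). lia. Qed.

Definition Disj (S : nat -> nat -> bool) := forall i j x, i <> j -> S i x = true -> S j x = true -> False.

Lemma nsum_zero f K : (forall i, i < K -> f i = 0) -> nsum f K = 0.
Proof. induction K; intros H; simpl; auto. rewrite IHK, H; auto; intros; apply H; lia. Qed.

Lemma disj_point S n K : Disj S -> nsum (fun i => if S i n then 1 else 0) K <= 1.
Proof.
  intros HD. induction K; simpl; [lia|].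
  destruct (S K n) eqn:E; [|lia].
  rewrite nsum_zero. lia. intros i Hi. destruct (S i n) eqn:E2; auto.
  exfalso. apply (HD i K n); auto; lia.
Qed.

Lemma disj_sum S n K : Disj S -> nsum (fun i => count_below (S i) n) K <= n.
Proof.
  intros HD. induction n; simpl.
  - rewrite nsum_zero; auto.
  - assert (nsum (fun i => count_below (S i) n + (if S i n then 1 else 0)) K =
            nsum (fun i => count_below (S i) n) K + nsum (fun i => if S i n then 1 else 0) K).
    { clear. induction K; simpl; lia. }
    rewrite H. pose proof (disj_point S n K HD). lia.
Qed.

Lemma fin_bound (P : nat -> Prop) (Q : nat -> nat -> Prop) K :
  (forall i, i < K -> P i \/ exists L, forall n, L <= n -> Q i n) ->
  exists L, forall i, i < K -> P i \/ forall n, L <= n -> Q i n.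
Proof.
  induction K; intros H. exists 0; intros; lia.
  destruct IHK as [L HL]. intros; apply H; lia.
  destruct (H K ltac:(lia)) as [HP|[L2 HL2]].
  - exists L. intros i Hi. destruct (Nat.eq_dec i K). subst; auto. apply HL; lia.
  - exists (Nat.max L L2). intros i Hi. destruct (Nat.eq_dec i K). subst; right; intros; apply HL2; lia.
    destruct (HL i ltac:(lia)) as [|HQ]; auto. right; intros; apply HQ; lia.
Qed.

Definition orf (X Y : nat -> bool) x := X x || Y x.
Definition goodR (B : nat -> bool) (c : R) :=
  forall L, exists n, L <= n /\ (INR (count_below B n) <= c * INR n)%R.

Lemma step_choice (B : nat -> bool) (c : R) (S : nat -> nat -> bool) (N M : nat) :
  0 < M -> goodR B c -> Disj S ->
  exists i, (forall x, x < N -> S i x = false) /\ goodR (orf B (S i)) (c + / INR M).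
Proof.
  intros HM HB HD. apply NNPP; intros Hn.
  assert (Hall : forall i, i < N + M + 1 ->
     (exists x, x < N /\ S i x = true) \/ exists L, forall n, L <= n ->
       (INR (count_below (orf B (S i)) n) > (c + / INR M) * INR n)%R).
  { intros i _. destruct (classic (exists x, x < N /\ S i x = true)) as [H|H]; [left; auto|right].
    apply NNPP; intros H2. apply Hn. exists i. split.
    - intros x Hx. destruct (S i x) eqn:E; auto. exfalso; apply H; eauto.
    - intros L. apply NNPP; intros H3. apply H2. exists L. intros n Hn2.
      apply Rnot_le_gt. intros H4. apply H3. eauto. }
  destruct (fin_bound _ _ _ Hall) as [L HL].
  destruct (HB (L + N + 1)) as [n [Hn1 Hn2]].
  assert (Hper : forall i, i < N + M + 1 -> n <= M * count_below (S i) n + n * count_below (S i) N).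
  { intros i Hi. destruct (HL i Hi) as [Hx|HQ].
    - pose proof (count_pos _ _ Hx). nia.
    - specialize (HQ n ltac:(lia)).
      pose proof (count_or B (S i) n). fold (orf B (S i)) in H.
      apply le_INR in H. rewrite plus_INR in H.
      assert (INR n < INR M * INR (count_below (S i) n))%R.
      { assert (0 < INR M)%R by (apply lt_0_INR; lia).
        assert (INR (count_below (S i) n) > / INR M * INR n)%R by lra.
        apply Rmult_lt_compat_l with (r := INR M) in H1; auto.
        rewrite <- Rmult_assoc, Rinv_r in H1 by lra. lra. }
      rewrite <- mult_INR in H0. apply INR_lt in H0. lia. }
  pose proof (nsum_ge _ n _ Hper). rewrite nsum_lin in H.
  pose proof (disj_sum S n (N+M+1) HD). pose proof (disj_sum S N (N+M+1) HD). nia.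
Qed.
Section Constr.
Variable S3 : nat -> nat -> nat -> bool.
Variable m : nat.
Hypothesis Hm : 1 <= m.

Definition Mk k := m * 2 ^ (S k).
Fixpoint cc k : R := match k with 0 => 0%R | S k => (cc k + / INR (Mk k))%R end.

Lemma cc_eq k : (cc k + / (INR m * 2 ^ k) = / INR m)%R.
Proof.
  assert (0 < INR m)%R by (apply lt_0_INR; lia).
  induction k; simpl.
  - field. lra.
  - unfold Mk. rewrite mult_INR, pow_INR. change (INR 2) with 2%R.
    assert (0 < 2 ^ k)%R by (apply pow_lt; lra).
    replace (2 ^ S k)%R with (2 * 2 ^ k)%R by (simpl; ring).
    rewrite <- IHk. field. split; lra.
Qed.

Lemma cc_le k : (cc k <= / INR m)%R.
Proof.
  rewrite <- (cc_eq k). assert (0 < INR m)%R by (apply lt_0_INR; lia).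
  assert (0 < 2 ^ k)%R by (apply pow_lt; lra).
  assert (0 < / (INR m * 2 ^ k))%R by (apply Rinv_0_lt_compat; nra). lra.
Qed.

Lemma cc_mono k : (cc k <= cc (S k))%R.
Proof. simpl. assert (0 < / INR (Mk k))%R. apply Rinv_0_lt_compat, lt_0_INR. unfold Mk.
  pose proof (Nat.pow_nonzero 2 (S k)). nia. lra. Qed.

Definition Inv k (p : (nat -> bool) * nat) :=
  goodR (fst p) (cc k) /\ (INR (count_below (fst p) (snd p)) <= cc k * INR (snd p))%R /\ k < snd p.

Lemma Inv0 : Inv 0 (fun _ => false, 1).
Proof.
  assert (H0 : forall n, count_below (fun _ => false) n = 0) by (induction n; simpl; lia).
  split; [|split]; simpl; auto. intros L; exists L; split; auto; rewrite H0; simpl; lra. lra. Qed.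

Definition StepRel k (p p' : (nat -> bool) * nat) :=
  Inv (S k) p' /\ (forall x, x < snd p -> fst p' x = fst p x) /\
  (forall x, fst p x = true -> fst p' x = true) /\ snd p < snd p' /\
  (Disj (S3 k) -> exists i, forall x, S3 k i x = true -> fst p' x = true).

Lemma step_ex k p : Inv k p -> exists p', StepRel k p p'.
Proof.
  destruct p as [B N]. intros [Hg [Hc Hk]]; simpl in *.
  assert (HM : 0 < Mk k) by (unfold Mk; pose proof (Nat.pow_nonzero 2 (S k)); nia).
  destruct (classic (Disj (S3 k))) as [HD|HD].
  - destruct (step_choice B (cc k) (S3 k) N (Mk k) HM Hg HD) as [i [Hi Hg2]].
    destruct (Hg2 (N + k + 2)) as [n [Hn1 Hn2]].
    exists (orf B (S3 k i), n). split; [|split; [|split; [|split]]]; simpl.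
    + split; [|split]; simpl; auto. lia.
    + intros x Hx. unfold orf. rewrite Hi; auto. apply Bool.orb_false_r.
    + intros x Hx. unfold orf. rewrite Hx. auto.
    + lia.
    + intros _. exists i. intros x Hx. unfold orf. rewrite Hx. apply Bool.orb_true_r.
  - assert (Hg2 : goodR B (cc (S k))).
    { intros L. destruct (Hg L) as [n [H1 H2]]. exists n; split; auto.
      pose proof (cc_mono k). pose proof (pos_INR n). nra. }
    destruct (Hg2 (N + k + 2)) as [n [Hn1 Hn2]].
    exists (B, n). split; [|split; [|split; [|split]]]; simpl; auto.
    + split; [|split]; simpl; auto. lia.
    + lia.
    + intros H; contradiction.
Qed.

Definition stepf k (p : {p | Inv k p}) : {p' | StepRel k (proj1_sig p) p'} :=
  constructive_indefinite_description _ (step_ex k (proj1_sig p) (proj2_sig p)).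

Fixpoint stage k : {p | Inv k p} :=
  match k with
  | 0 => exist _ (fun _ => false, 1) Inv0
  | S k' => let q := stepf k' (stage k') in exist _ (proj1_sig q) (proj1 (proj2_sig q))
  end.

Definition Bk k := fst (proj1_sig (stage k)).
Definition Nk k := snd (proj1_sig (stage k)).

Lemma stage_rel k : StepRel k (proj1_sig (stage k)) (proj1_sig (stage (S k))).
Proof. simpl. exact (proj2_sig (stepf k (stage k))). Qed.

Lemma Nk_gt k : k < Nk k.
Proof. unfold Nk. destruct (proj2_sig (stage k)) as [_ [_ H]]. auto. Qed.

Lemma Nk_mono j k : j <= k -> Nk j <= Nk k.
Proof. induction 1; auto. destruct (stage_rel m0) as [_ [_ [_ [HH _]]]]. unfold Nk in *. lia. Qed.

Lemma Bk_agree j k x : j <= k -> x < Nk j -> Bk k x = Bk j x.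
Proof.
  induction 1; intros Hx; auto.
  destruct (stage_rel m0) as [_ [HH _]]. unfold Bk in *. rewrite HH; auto.
  match goal with H0 : j <= m0 |- _ => pose proof (Nk_mono _ _ H0) end. unfold Nk in *. lia.
Qed.

Lemma Bk_mono j k x : j <= k -> Bk j x = true -> Bk k x = true.
Proof.
  induction 1; intros Hx; auto.
  destruct (stage_rel m0) as [_ [_ [HH _]]]. unfold Bk in *. auto.
Qed.

Definition Binf x := Bk (S x) x.

Lemma Binf_eq k x : x < Nk k -> Binf x = Bk k x.
Proof.
  unfold Binf. intros Hx. destruct (le_lt_dec (S x) k).
  - symmetry. apply Bk_agree; auto. pose proof (Nk_gt (S x)). lia.
  - apply Bk_agree; auto. lia.
Qed.

Lemma Binf_kill k : Disj (S3 k) -> exists i, forall x, S3 k i x = true -> Binf x = true.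
Proof.
  intros HD. destruct (stage_rel k) as [_ [_ [_ [_ H]]]]. destruct (H HD) as [i Hi].
  exists i. intros x Hx. specialize (Hi x Hx). fold (Bk (S k)) in Hi.
  pose proof (Nk_gt (Nat.max (S x) (S k))).
  rewrite (Binf_eq (Nat.max (S x) (S k))) by lia.
  apply (Bk_mono (S k)); auto. lia.
Qed.

Lemma Binf_count k : (INR (count_below Binf (Nk k)) <= / INR m * INR (Nk k))%R.
Proof.
  rewrite (count_ext Binf (Bk k)) by (intros; apply Binf_eq; auto).
  destruct (proj2_sig (stage k)) as [_ [H _]]. unfold Bk, Nk.
  pose proof (cc_le k). pose proof (pos_INR (snd (proj1_sig (stage k)))). nra.
Qed.

End Constr.

Theorem kill_all (S3 : nat -> nat -> nat -> bool) (m : nat) : 1 <= m ->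
  exists A : nat -> bool,
    (forall k, Disj (S3 k) -> exists i, forall x, S3 k i x = true -> A x = false) /\
    (forall K, exists n, K <= n /\ (INR (count_below A n) >= (1 - / INR m) * INR n)%R).
Proof.
  intros Hm. exists (fun x => negb (Binf S3 m Hm x)). split.
  - intros k HD. destruct (Binf_kill S3 m Hm k HD) as [i Hi]. exists i.
    intros x Hx. rewrite Hi; auto.
  - intros K. exists (Nk S3 m Hm K). split. pose proof (Nk_gt S3 m Hm K); lia.
    pose proof (count_compl (Binf S3 m Hm) (Nk S3 m Hm K)).
    pose proof (Binf_count S3 m Hm K).
    apply (f_equal INR) in H. rewrite plus_INR in H. lra.
Qed.

Lemma run_add p a b c : run p (a + b) c = run p b (run p a c).
Proof. revert c; induction a; intros c; simpl; auto. Qed.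

Lemma step_halted p c : halted p c -> step p c = c.
Proof.
  intros H. unfold step. unfold halted in H.
  destruct (nth_error p (pc c)) eqn:E; auto.
  apply nth_error_None in H. congruence.
Qed.

Lemma run_halted p n c : halted p c -> run p n c = c.
Proof. induction n; intros H; simpl; auto. rewrite step_halted; auto. Qed.

Lemma run_det p n n' c : halted p (run p n c) -> halted p (run p n' c) -> run p n c = run p n' c.
Proof.
  intros H1 H2. destruct (le_lt_dec n n').
  - assert (Eqn : n' = n + (n' - n)) by lia. rewrite Eqn, run_add, (run_halted p (n' - n)); auto.
  - assert (Eqn : n = n' + (n - n')) by lia. rewrite Eqn, run_add, (run_halted p (n - n')); auto.
Qed.

Lemma computes_det e x y1 y2 : computes e x y1 -> computes e x y2 -> y1 = y2.
Proof.
  intros [n1 [H1 E1]] [n2 [H2 E2]]. rewrite (run_det _ _ _ _ H1 H2) in E1. congruence.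
Qed.

Definition dec (P : Prop) : bool := if excluded_middle_informative P then true else false.
Lemma dec_true P : dec P = true <-> P.
Proof. unfold dec. destruct (excluded_middle_informative P); split; intros; auto; congruence. Qed.

Definition SF (e i x : nat) : bool := dec (exists y, computes e i y /\ W y x).

Lemma limsup_ge (u : nat -> R) (c : R) :
  (forall K, exists n, K <= n /\ (c <= u n)%R) -> Rbar_le (Finite c) (LimSup_seq u).
Proof.
  intros H. destruct (ex_LimSup_seq u) as [l Hl]. rewrite (is_LimSup_seq_unique _ _ Hl).
  destruct l as [l| |]; simpl in *; auto.
  - apply Rnot_lt_le. intros Hlt.
    assert (Hp : (0 < (c - l) / 2)%R) by lra.
    destruct (Hl (mkposreal _ Hp)) as [_ [N HN]]. simpl in HN.
    destruct (H N) as [n [Hn1 Hn2]]. specialize (HN n Hn1). lra.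
  - destruct (Hl c) as [N HN]. destruct (H N) as [n [Hn1 Hn2]]. specialize (HN n Hn1). lra.
Qed.

Lemma part2 (eps : R) : (0 < eps)%R ->
  exists A : nat -> bool, strongly_hhi A /\ Rbar_le (Finite (1 - eps)) (upper_density A).
Proof.
  intros Heps. destruct (INR_archimed eps 1 (Rlt_gt _ _ Heps)) as [n0 Hn0].
  set (m := n0 + 2).
  assert (Hm1 : 1 <= m) by (unfold m; lia).
  assert (Hmr : (2 <= INR m)%R) by (unfold m; rewrite plus_INR; simpl; pose proof (pos_INR n0); lra).
  assert (Hme : (/ INR m <= eps)%R).
  { unfold m. rewrite plus_INR. pose proof (pos_INR n0).
    apply (Rmult_le_reg_l (INR n0 + INR 2)). simpl; lra.
    rewrite Rinv_r by (simpl; lra). simpl. nra. }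
  destruct (kill_all SF m Hm1) as [A [Hkill Hdens]].
  exists A. split; [split|].
  - intros L. destruct (Hdens (2 * L + 2)) as [n [Hn1 Hn2]].
    apply NNPP; intros Hno.
    assert (count_below A n <= L).
    { apply count_bound_below. intros k Hk _. destruct (A k) eqn:E; auto. exfalso; apply Hno; eauto. }
    apply le_INR in H. apply le_INR in Hn1. rewrite plus_INR, mult_INR in Hn1. simpl in Hn1.
    assert (0 < / INR m <= / 2)%R. split. apply Rinv_0_lt_compat; lra. apply Rinv_le_contravar; lra.
    assert (/ INR m * INR n <= / 2 * INR n)%R by (apply Rmult_le_compat_r; [apply pos_INR|lra]).
    lra.
  - intros [f [[e He] [Hdisj Hhit]]].
    assert (HD : Disj (SF e)).
    { intros i j x Hij Hi Hj. unfold SF in Hi, Hj; rewrite dec_true in Hi, Hj.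
      destruct Hi as [y1 [C1 W1]]. destruct Hj as [y2 [C2 W2]].
      rewrite (computes_det _ _ _ _ C1 (He i)) in W1.
      rewrite (computes_det _ _ _ _ C2 (He j)) in W2. eauto. }
    destruct (Hkill e HD) as [i Hi]. destruct (Hhit i) as [x [Hx Ax]].
    rewrite Hi in Ax. discriminate. unfold SF; apply dec_true. eauto.
  - unfold upper_density. apply limsup_ge. intros K.
    destruct (Hdens (S K)) as [n [Hn1 Hn2]]. destruct n as [|n]; [lia|].
    exists n. split; [lia|]. unfold rho.
    assert (0 < INR (S n))%R by (apply lt_0_INR; lia).
    apply (Rmult_le_reg_r (INR (S n))); auto. unfold Rdiv. rewrite Rmult_assoc, Rinv_l by lra.
    nra.
Qed.

Import ListNotations.
Inductive stmt := SNop | SInc (r : nat) | SSeq (s1 s2 : stmt) | SFor (r : nat) (s : stmt).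

Fixpoint len s := match s with SNop => 0 | SInc _ => 1 | SSeq a c => len a + len c | SFor _ s => len s + 2 end.

Fixpoint comp s b : program :=
  match s with
  | SNop => []
  | SInc r => [Inc r]
  | SSeq a c => comp a b ++ comp c (b + len a)
  | SFor r s => JzDec r (b + len s + 2) :: comp s (b + 1) ++ [JzDec 9 b]
  end.

Fixpoint ment s k : bool :=
  match s with SNop => false | SInc r => Nat.eqb r k | SSeq a c => ment a k || ment c k
  | SFor r s => Nat.eqb r k || ment s k end.

Fixpoint wf s : bool :=
  match s with SNop => true | SInc r => negb (Nat.eqb r 9) | SSeq a c => wf a && wf c
  | SFor r s => negb (Nat.eqb r 9) && negb (ment s r) && wf s end.

Fixpoint eval s (g : nat -> nat) : nat -> nat :=
  match s with
  | SNop => g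
  | SInc r => upd g r (S (g r))
  | SSeq a c => eval c (eval a g)
  | SFor r s => upd (Nat.iter (g r) (eval s) g) r 0
  end.

Lemma comp_len s b : length (comp s b) = len s.
Proof. revert b; induction s; intros b; simpl; auto. rewrite length_app, IHs1, IHs2; auto.
  rewrite length_app, IHs; simpl; lia. Qed.

Lemma upd_eq g r v : upd g r v r = v.
Proof. unfold upd. rewrite Nat.eqb_refl. auto. Qed.
Lemma upd_neq g r v k : k <> r -> upd g r v k = g k.
Proof. unfold upd. intros H. apply Nat.eqb_neq in H. rewrite H. auto. Qed.
Lemma upd_same g r : upd g r (g r) = g.
Proof. apply functional_extensionality; intros k. unfold upd. destruct (Nat.eqb_spec k r); subst; auto. Qed.
Lemma upd_upd g r v w : upd (upd g r v) r w = upd g r w.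
Proof. apply functional_extensionality; intros k. unfold upd. destruct (Nat.eqb_spec k r); auto. Qed.
Lemma upd_comm g r v r' w : r <> r' -> upd (upd g r v) r' w = upd (upd g r' w) r v.
Proof. intros H. apply functional_extensionality; intros k. unfold upd.
  destruct (Nat.eqb_spec k r), (Nat.eqb_spec k r'); subst; auto. congruence. Qed.

Lemma eval_nom s g k : ment s k = false -> eval s g k = g k.
Proof.
  revert g; induction s; intros g H; simpl in *; auto.
  - apply Nat.eqb_neq in H. rewrite upd_neq; auto.
  - apply Bool.orb_false_iff in H. destruct H. rewrite IHs2, IHs1; auto.
  - apply Bool.orb_false_iff in H. destruct H. apply Nat.eqb_neq in H.
    rewrite upd_neq by auto. generalize (g r); intros n. induction n; simpl; auto.
    rewrite IHs; auto.
Qed.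

Lemma iter_upd_comm s g r v n : (forall h, eval s (upd h r v) = upd (eval s h) r v) ->
  Nat.iter n (eval s) (upd g r v) = upd (Nat.iter n (eval s) g) r v.
Proof. intros H. induction n; simpl; auto. rewrite IHn, H. auto. Qed.

Lemma eval_upd s g r v : ment s r = false -> eval s (upd g r v) = upd (eval s g) r v.
Proof.
  revert g; induction s; intros g H; simpl in *; auto.
  - apply Nat.eqb_neq in H. rewrite upd_neq by auto. apply upd_comm; auto.
  - apply Bool.orb_false_iff in H. destruct H. rewrite IHs1, IHs2; auto.
  - apply Bool.orb_false_iff in H. destruct H as [H1 H2]. apply Nat.eqb_neq in H1.
    rewrite upd_neq by auto. rewrite iter_upd_comm by (intros; apply IHs; auto).
    apply upd_comm; auto.
Qed.

Lemma wf_9 s : wf s = true -> ment s 9 = false.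
Proof.
  induction s; simpl; intros H; auto.
  - apply Bool.negb_true_iff in H; auto.
  - apply andb_prop in H; destruct H. rewrite IHs1, IHs2; auto.
  - apply andb_prop in H; destruct H as [H H3]. apply andb_prop in H; destruct H.
    apply Bool.negb_true_iff in H. rewrite H, IHs; auto.
Qed.

Lemma step_nth p c i : nth_error p (pc c) = Some i ->
  step p c = match i with
             | Inc r => mkConfig (S (pc c)) (upd (regs c) r (S (regs c r)))
             | JzDec r j => match regs c r with 0 => mkConfig j (regs c) | S v => mkConfig (S (pc c)) (upd (regs c) r v) end
             end.
Proof. intros H. unfold step. rewrite H. auto. Qed.

Lemma nth_mid (pre l post : program) i : i < length l -> nth_error (pre ++ l ++ post) (length pre + i) = nth_error l i.
Proof. intros H. rewrite nth_error_app2 by lia. rewrite nth_error_app1 by lia. f_equal; lia. Qed.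

Lemma comp_correct s : wf s = true -> forall pre post g, g 9 = 0 ->
  exists k, run (pre ++ comp s (length pre) ++ post) k (mkConfig (length pre) g) =
            mkConfig (length pre + len s) (eval s g).
Proof.
  induction s; intros Hwf pre post g Hg; simpl in Hwf.
  - exists 0. simpl. rewrite Nat.add_0_r. auto.
  - exists 1. simpl. rewrite step_nth with (i := Inc r).
    simpl. f_equal. lia. simpl. rewrite nth_error_app2 by lia. rewrite Nat.sub_diag. auto.
  - apply andb_prop in Hwf; destruct Hwf as [W1 W2].
    destruct (IHs1 W1 pre (comp s2 (length pre + len s1) ++ post) g Hg) as [k1 H1].
    assert (Hg2 : eval s1 g 9 = 0) by (rewrite eval_nom; auto; apply wf_9; auto).
    destruct (IHs2 W2 (pre ++ comp s1 (length pre)) post (eval s1 g) Hg2) as [k2 H2].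
    rewrite length_app, comp_len in H2.
    exists (k1 + k2). rewrite run_add. simpl comp.
    rewrite <- app_assoc. rewrite H1. rewrite <- app_assoc in H2. rewrite H2. simpl. f_equal. lia.
  - apply andb_prop in Hwf; destruct Hwf as [Hw Wb]. apply andb_prop in Hw; destruct Hw as [Hr Hm].
    apply Bool.negb_true_iff in Hr, Hm. apply Nat.eqb_neq in Hr.
    set (b := length pre).
    set (P := pre ++ comp (SFor r s) b ++ post).
    assert (Hb : forall g, g 9 = 0 -> exists k, run P k (mkConfig (b + 1) g) = mkConfig (b + 1 + len s) (eval s g)).
    { intros g0 Hg0. destruct (IHs Wb (pre ++ [JzDec r (b + len s + 2)]) ([JzDec 9 b] ++ post) g0 Hg0) as [k Hk].
      exists k. rewrite length_app in Hk. simpl in Hk. fold b in Hk.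
      assert (EP : P = (pre ++ [JzDec r (b + len s + 2)]) ++ comp s (b + 1) ++ JzDec 9 b :: post).
      { unfold P. simpl comp. rewrite <- app_assoc. simpl. rewrite <- app_assoc. auto. }
      rewrite EP. rewrite Hk. auto. }
    assert (Hn0 : forall i, i < length (comp (SFor r s) b) -> nth_error P (b + i) = nth_error (comp (SFor r s) b) i).
    { intros i Hi. unfold P. apply nth_mid; auto. }
    simpl comp in Hn0. simpl length in Hn0. rewrite length_app, comp_len in Hn0. simpl in Hn0.
    assert (Hloop : forall v g, g 9 = 0 -> g r = v -> exists k, run P k (mkConfig b g) =
               mkConfig (b + (len s + 2)) (upd (Nat.iter v (eval s) g) r 0)).
    { induction v; intros g0 Hg0 Hv.
      - exists 1. simpl. rewrite step_nth with (i := JzDec r (b + len s + 2)).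
        simpl. rewrite Hv. rewrite <- Hv, upd_same. f_equal; lia.
        simpl. rewrite <- (Nat.add_0_r b) at 1. rewrite Hn0 by lia. auto.
      - assert (H1 : run P 1 (mkConfig b g0) = mkConfig (b + 1) (upd g0 r v)).
        { simpl. rewrite step_nth with (i := JzDec r (b + len s + 2)).
          simpl. rewrite Hv. f_equal; lia. simpl. rewrite <- (Nat.add_0_r b) at 1. rewrite Hn0 by lia. auto. }
        assert (Hg1 : upd g0 r v 9 = 0) by (rewrite upd_neq; auto).
        destruct (Hb _ Hg1) as [k2 H2].
        set (g2 := eval s (upd g0 r v)).
        assert (Hg2 : g2 9 = 0). { unfold g2. rewrite eval_nom. auto. apply wf_9; auto. }
        assert (H3 : run P 1 (mkConfig (b + 1 + len s) g2) = mkConfig b g2).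
        { simpl. rewrite step_nth with (i := JzDec 9 b). simpl. rewrite Hg2. auto.
          simpl. replace (b + 1 + len s) with (b + (len s + 1)) by lia. rewrite Hn0 by lia.
          replace (len s + 1) with (S (len s)) by lia. rewrite nth_error_cons_succ. rewrite nth_error_app2; rewrite comp_len; try lia.
          rewrite Nat.sub_diag. auto. }
        assert (Hg2r : g2 r = v). { unfold g2. rewrite eval_upd by auto. apply upd_eq. }
        destruct (IHv g2 Hg2 Hg2r) as [k4 H4].
        exists (1 + k2 + 1 + k4). rewrite !run_add. rewrite H1, H2. fold g2. rewrite H3, H4. f_equal.
        unfold g2. rewrite eval_upd by auto. rewrite iter_upd_comm by (intros; apply eval_upd; auto).
        rewrite upd_upd. f_equal. simpl. clear. induction v; simpl; auto. rewrite IHv. auto. }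
    destruct (Hloop (g r) g Hg eq_refl) as [k Hk]. exists k. exact Hk.
Qed.

Definition enc_instr (i : instr) : nat :=
  match i with Inc b => Cantor.to_nat (0, b) | JzDec r j => Cantor.to_nat (1, Cantor.to_nat (r, j)) end.

Fixpoint encode (p : program) : nat :=
  match p with [] => 0 | i :: l => S (Cantor.to_nat (enc_instr i, encode l)) end.

Lemma dec_enc_instr i : decode_instr (enc_instr i) = i.
Proof.
  destruct i; unfold decode_instr, enc_instr; rewrite Cantor.cancel_of_to; auto.
  rewrite Cantor.cancel_of_to. auto.
Qed.

Lemma decode_list_S f m : decode_list (S f) (S m) = let (h,t) := Cantor.of_nat m in decode_instr h :: decode_list f t.
Proof. reflexivity. Qed.

Lemma decode_encode l : forall fuel, encode l <= fuel -> decode_list fuel (encode l) = l.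
Proof.
  induction l; intros fuel H.
  - destruct fuel; reflexivity.
  - destruct fuel. simpl in H; lia.
    change (encode (a :: l)) with (S (Cantor.to_nat (enc_instr a, encode l))) in H |- *.
    rewrite decode_list_S.
    rewrite Cantor.cancel_of_to. rewrite dec_enc_instr. f_equal. apply IHl.
    pose proof (Cantor.to_nat_non_decreasing (enc_instr a) (encode l)). lia.
Qed.

Lemma prog_of_encode l : prog_of (encode l) = l.
Proof. unfold prog_of. apply decode_encode. auto. Qed.

Lemma stmt_computes s x : wf s = true -> computes (encode (comp s 0)) x (eval s (regs (init x)) 0).
Proof.
  intros Hwf. destruct (comp_correct s Hwf [] [] (regs (init x)) eq_refl) as [k Hk].
  simpl in Hk. rewrite app_nil_r in Hk. exists k. rewrite prog_of_encode.
  unfold init in *. rewrite Hk. split; auto. unfold halted. simpl. rewrite comp_len. auto.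
Qed.

Lemma eval_seq a c g : eval (SSeq a c) g = eval c (eval a g). Proof. reflexivity. Qed.
Lemma eval_for r s g : eval (SFor r s) g = upd (Nat.iter (g r) (eval s) g) r 0. Proof. reflexivity. Qed.
Lemma eval_inc r g : eval (SInc r) g = upd g r (S (g r)). Proof. reflexivity. Qed.
Lemma eval_nop g : eval SNop g = g. Proof. reflexivity. Qed.
Ltac ev := rewrite ?eval_seq, ?eval_for, ?eval_inc, ?eval_nop.
Ltac updx := apply functional_extensionality; intro; unfold upd;
  repeat match goal with |- context [Nat.eqb ?a ?b] => destruct (Nat.eqb_spec a b) end;
  subst; try lia; try congruence.

Definition add a b t := SSeq (SFor a (SSeq (SInc b) (SInc t))) (SFor t (SInc a)).

Lemma iter_inc2 b t g k : b <> t ->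
  Nat.iter k (eval (SSeq (SInc b) (SInc t))) g = upd (upd g b (g b + k)) t (g t + k).
Proof.
  intros H. induction k.
  - simpl. rewrite !Nat.add_0_r, !upd_same. auto.
  - rewrite Nat.iter_succ, IHk. ev. updx.
Qed.

Lemma iter_inc1 a g k : Nat.iter k (eval (SInc a)) g = upd g a (g a + k).
Proof. induction k. simpl. rewrite Nat.add_0_r, upd_same; auto. rewrite Nat.iter_succ, IHk. ev. updx. Qed.

Lemma add_spec a b t g : a <> b -> b <> t -> a <> t -> g t = 0 ->
  eval (add a b t) g = upd g b (g b + g a).
Proof.
  intros H1 H2 H3 H4. unfold add. ev. rewrite iter_inc2 by auto.
  rewrite upd_neq by auto. rewrite upd_eq. rewrite iter_inc1. rewrite H4. simpl. updx.

Qed.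

Fixpoint setc r c := match c with 0 => SNop | S c => SSeq (SInc r) (setc r c) end.
Lemma setc_spec r c g : eval (setc r c) g = upd g r (g r + c).
Proof. revert g; induction c; intros g; simpl setc; ev. rewrite Nat.add_0_r, upd_same; auto.
  rewrite IHc. updx. Qed.

Definition clear r := SFor r SNop.
Lemma clear_spec r g : eval (clear r) g = upd g r 0.
Proof. unfold clear. ev. f_equal. induction (g r); simpl; auto. Qed.

Definition tri k := nat_rec (fun _ => nat) 0 (fun i m => S i + m) k.
Lemma tri_S n : tri (S n) = S n + tri n. Proof. reflexivity. Qed.
Lemma to_nat_tri x y : Cantor.to_nat (x, y) = y + tri (y + x).
Proof. reflexivity. Qed.

Definition pairS x y o :=
  SSeq (add x 4 6) (SSeq (add y 4 6) (SSeq (SFor 4 (SSeq (SInc 5) (add 5 o 6)))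
   (SSeq (clear 5) (add y o 6)))).

Ltac eqbs := repeat match goal with
 | |- context [Nat.eqb ?a ?b] =>
   first [ replace (Nat.eqb a b) with true by (symmetry; apply Nat.eqb_eq; lia)
         | replace (Nat.eqb a b) with false by (symmetry; apply Nat.eqb_neq; lia)
         | destruct (Nat.eqb_spec a b); try subst ]
 end; cbv iota beta.
Ltac zr := repeat match goal with H : ?g ?k = 0 |- context [?g ?k] => rewrite H end;
  rewrite ?Nat.add_0_l, ?Nat.add_0_r; try reflexivity; try lia.
Ltac solve_upd := apply functional_extensionality; intro; unfold upd; eqbs; try lia; try zr.

Lemma iter_tri o g k : o <> 5 -> o <> 6 -> g 6 = 0 -> g 5 = 0 ->
  Nat.iter k (eval (SSeq (SInc 5) (add 5 o 6))) g = upd (upd g 5 k) o (g o + tri k).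
Proof.
  intros H1 H2 H3 H4. induction k.
  - simpl. solve_upd.
  - rewrite Nat.iter_succ, IHk. ev. rewrite add_spec by (try lia; unfold upd; eqbs; lia).
    rewrite tri_S. solve_upd.
Qed.

Lemma pair_spec x y o g : x <> y -> x <> o -> y <> o ->
  x <> 4 -> x <> 5 -> x <> 6 -> y <> 4 -> y <> 5 -> y <> 6 -> o <> 4 -> o <> 5 -> o <> 6 ->
  g 4 = 0 -> g 5 = 0 -> g 6 = 0 ->
  eval (pairS x y o) g = upd g o (g o + Cantor.to_nat (g x, g y)).
Proof.
  intros. unfold pairS. ev.
  rewrite (add_spec x 4 6) by (try lia; unfold upd; eqbs; lia).
  rewrite (add_spec y 4 6) by (try lia; unfold upd; eqbs; lia).
  rewrite iter_tri by (try lia; unfold upd; eqbs; lia).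
  rewrite clear_spec.
  rewrite add_spec by (try lia; unfold upd; eqbs; lia).
  rewrite to_nat_tri. solve_upd. all: try rewrite H11; rewrite ?Nat.add_0_l, (Nat.add_comm (g x) (g y)); lia.
Qed.

Definition move a b := SFor a (SInc b).
Lemma move_spec a b g : a <> b -> eval (move a b) g = upd (upd g b (g b + g a)) a 0.
Proof. intros H. unfold move. rewrite eval_for, iter_inc1. solve_upd. Qed.

Definition mk (i : instr) : stmt :=
  match i with
  | Inc b => SSeq (setc 8 b) (SSeq (pairS 7 8 2) (clear 8))
  | JzDec r j => SSeq (setc 7 r) (SSeq (setc 8 j) (SSeq (pairS 7 8 2) (SSeq (clear 7) (SSeq (clear 8)
       (SSeq (setc 7 1) (SSeq (pairS 7 2 8) (SSeq (clear 2) (SSeq (clear 7) (move 8 2)))))))))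
  end.

Ltac sc := (try lia; unfold upd; eqbs; lia).

Lemma mk_spec i g : g 2 = 0 -> g 4 = 0 -> g 5 = 0 -> g 6 = 0 -> g 7 = 0 -> g 8 = 0 ->
  eval (mk i) g = upd g 2 (enc_instr i).
Proof.
  intros. destruct i as [b|r j]; simpl mk; ev.
  - rewrite setc_spec. rewrite pair_spec by sc. rewrite clear_spec.
    unfold enc_instr. solve_upd.
  - rewrite !setc_spec. rewrite (pair_spec 7 8 2) by sc. rewrite !clear_spec.
    rewrite ?setc_spec. rewrite pair_spec by sc. rewrite ?clear_spec. rewrite move_spec by lia.
    unfold enc_instr. solve_upd.
Qed.

Definition push (i : instr) : stmt :=
  SSeq (mk i) (SSeq (pairS 2 1 3) (SSeq (clear 2) (SSeq (clear 1) (SSeq (SInc 1) (move 3 1))))).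

Definition Fz (i : instr) (z : nat) := S (Cantor.to_nat (enc_instr i, z)).

Definition clean (g : nat -> nat) := g 2 = 0 /\ g 3 = 0 /\ g 4 = 0 /\ g 5 = 0 /\ g 6 = 0 /\ g 7 = 0 /\ g 8 = 0.

Lemma clean_upd1 g v : clean g -> clean (upd g 1 v).
Proof. unfold clean, upd; simpl; auto. Qed.

Lemma push_spec i g : clean g -> eval (push i) g = upd g 1 (Fz i (g 1)).
Proof.
  intros (H2 & H3 & H4 & H5 & H6 & H7 & H8). unfold push; ev.
  rewrite mk_spec by auto. rewrite pair_spec by sc. rewrite !clear_spec.
  rewrite move_spec by lia. unfold Fz. solve_upd.
Qed.

Fixpoint pushes (l : list instr) : stmt := match l with [] => SNop | i :: l => SSeq (push i) (pushes l) end.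

Lemma pushes_spec l g : clean g -> eval (pushes l) g = upd g 1 (fold_left (fun z i => Fz i z) l (g 1)).
Proof.
  revert g; induction l; intros g Hc; simpl pushes; ev.
  - simpl. rewrite upd_same; auto.
  - rewrite push_spec by auto. rewrite IHl by (apply clean_upd1; auto).
    rewrite upd_upd, upd_eq. auto.
Qed.

Lemma iter_push i g n : clean g -> Nat.iter n (eval (push i)) g = upd g 1 (Nat.iter n (Fz i) (g 1)).
Proof.
  intros Hc. induction n. simpl. rewrite upd_same; auto.
  rewrite Nat.iter_succ, IHn, push_spec by (apply clean_upd1; auto).
  rewrite upd_upd, upd_eq. auto.
Qed.

Lemma encode_app l rest : encode (l ++ rest) = fold_left (fun z i => Fz i z) (rev l) (encode rest).
Proof.
  rewrite <- fold_left_rev_right, rev_involutive.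
  induction l; simpl; auto. rewrite IHl. auto.
Qed.

Lemma encode_repeat i n rest : encode (repeat i n ++ rest) = Nat.iter n (Fz i) (encode rest).
Proof. induction n; simpl; auto. rewrite IHn. auto. Qed.

Definition Main : program :=
  [ JzDec 9 15; JzDec 2 9; JzDec 0 6; JzDec 0 14; Inc 4; JzDec 9 2; JzDec 4 1; Inc 0; JzDec 9 6;
    JzDec 0 14; JzDec 0 12; JzDec 9 9; Inc 3; JzDec 9 15; JzDec 9 14 ].
Definition Fin := JzDec 3 1.
Definition wprog (n : nat) : program := Main ++ repeat (Inc 2) n ++ [Fin].

Definition fprog : stmt :=
  SSeq (push Fin) (SSeq (SFor 0 (push (Inc 2))) (SSeq (pushes (rev Main)) (move 1 0))).

Lemma fprog_wf : wf fprog = true.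
Proof. vm_compute. reflexivity. Qed.

Lemma fprog_eval x : eval fprog (regs (init x)) 0 = encode (wprog x).
Proof.
  set (g0 := regs (init x)).
  assert (Hc : clean g0) by (unfold clean, g0; simpl; repeat split).
  unfold fprog. ev. rewrite push_spec by auto.
  rewrite iter_push by (apply clean_upd1; auto).
  assert (Hc2 : clean (upd (upd (upd g0 1 (Fz Fin (g0 1))) 1 (Nat.iter (upd g0 1 (Fz Fin (g0 1)) 0) (Fz (Inc 2)) (upd g0 1 (Fz Fin (g0 1)) 1))) 0 0)).
  { unfold clean, upd; simpl. apply Hc. }
  rewrite pushes_spec by auto. rewrite move_spec by lia.
  unfold wprog. rewrite encode_app, encode_repeat.
  unfold upd at 1. simpl Nat.eqb. cbv iota beta.
  unfold upd. simpl. unfold g0; simpl. auto.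
Qed.

Lemma f_computable : computable (fun n => encode (wprog n)).
Proof.
  exists (encode (comp fprog 0)). intros x. rewrite <- fprog_eval. apply stmt_computes. apply fprog_wf.
Qed.

Definition leads p c (P : config -> Prop) := exists k, P (run p k c).

Lemma leads_now p c (P : config -> Prop) : P c -> leads p c P.
Proof. intros; exists 0; auto. Qed.
Lemma leads_step p c P : leads p (step p c) P -> leads p c P.
Proof. intros [k H]; exists (S k); auto. Qed.
Lemma leads_trans p c (P Q : config -> Prop) : leads p c P -> (forall c', P c' -> leads p c' Q) -> leads p c Q.
Proof. intros [k H] H2. destruct (H2 _ H) as [k2 H3]. exists (k + k2). rewrite run_add. auto. Qed.

Lemma nth_wprog n k : k < 15 -> nth_error (wprog n) k = nth_error Main k.
Proof. intros. unfold wprog. apply nth_error_app1. auto. Qed.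

Lemma st_inc n k g r : k < 15 -> nth_error Main k = Some (Inc r) ->
  step (wprog n) (mkConfig k g) = mkConfig (S k) (upd g r (S (g r))).
Proof. intros. rewrite (step_nth _ _ (Inc r)); auto. simpl. rewrite nth_wprog; auto. Qed.
Lemma st_jz0 n k g r j : k < 15 -> nth_error Main k = Some (JzDec r j) -> g r = 0 ->
  step (wprog n) (mkConfig k g) = mkConfig j g.
Proof. intros. rewrite (step_nth _ _ (JzDec r j)); simpl. rewrite H1; auto. rewrite nth_wprog; auto. Qed.
Lemma st_jzS n k g r j v : k < 15 -> nth_error Main k = Some (JzDec r j) -> g r = S v ->
  step (wprog n) (mkConfig k g) = mkConfig (S k) (upd g r v).
Proof. intros. rewrite (step_nth _ _ (JzDec r j)); simpl. rewrite H1; auto. rewrite nth_wprog; auto. Qed.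

Ltac s_inc := apply leads_step; erewrite st_inc by (try lia; reflexivity).
Ltac s_jz0 := apply leads_step; erewrite st_jz0 by (try lia; try reflexivity; unfold upd; simpl; lia).
Ltac s_jzS v := apply leads_step; erewrite (st_jzS _ _ _ _ _ v) by (try lia; try reflexivity; unfold upd; simpl; lia).

Lemma halve_even n m : forall a g, g 0 = 2 * m -> g 4 = a -> g 9 = 0 ->
  leads (wprog n) (mkConfig 2 g) (fun c => pc c = 6 /\ regs c 0 = 0 /\ regs c 4 = a + m /\
        regs c 2 = g 2 /\ regs c 3 = g 3 /\ regs c 9 = 0).
Proof.
  induction m; intros a g H0 H4 H9.
  - s_jz0. apply leads_now. simpl. repeat split; auto; lia.
  - s_jzS (S (2 * m)). s_jzS (2 * m). s_inc. s_jz0.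
    eapply leads_trans. apply (IHm (S a)); unfold upd; simpl; auto; lia.
    intros c (? & ? & ? & ? & ? & ?). apply leads_now. repeat split; auto; lia.
Qed.

Lemma halve_odd n m : forall g, g 0 = 2 * m + 1 -> g 9 = 0 ->
  leads (wprog n) (mkConfig 2 g) (fun c => pc c = 14 /\ regs c 9 = 0).
Proof.
  induction m; intros g H0 H9.
  - s_jzS 0. s_jz0. apply leads_now. simpl. auto.
  - s_jzS (S (2 * m + 1)). s_jzS (2 * m + 1). s_inc. s_jz0.
    apply IHm; unfold upd; simpl; auto; lia.
Qed.

Lemma move_loop n m : forall a g, g 4 = m -> g 0 = a -> g 9 = 0 ->
  leads (wprog n) (mkConfig 6 g) (fun c => pc c = 1 /\ regs c 0 = a + m /\ regs c 4 = 0 /\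
        regs c 2 = g 2 /\ regs c 3 = g 3 /\ regs c 9 = 0).
Proof.
  induction m; intros a g H4 H0 H9.
  - s_jz0. apply leads_now. simpl. repeat split; auto; lia.
  - s_jzS m. s_inc. s_jz0.
    eapply leads_trans. apply (IHm (S a)); unfold upd; simpl; auto; lia.
    intros c (? & ? & ? & ? & ? & ?). apply leads_now. repeat split; auto; lia.
Qed.

Lemma parity_even n m : forall g, g 0 = 2 * m -> g 9 = 0 ->
  leads (wprog n) (mkConfig 9 g) (fun c => pc c = 14 /\ regs c 9 = 0).
Proof.
  induction m; intros g H0 H9.
  - s_jz0. apply leads_now. simpl. auto.
  - s_jzS (S (2 * m)). s_jzS (2 * m). s_jz0. apply IHm; unfold upd; simpl; auto; lia.
Qed.

Lemma parity_odd n m : forall g, g 0 = 2 * m + 1 -> g 9 = 0 ->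
  leads (wprog n) (mkConfig 9 g) (fun c => pc c = 12 /\ regs c 2 = g 2 /\ regs c 3 = g 3 /\ regs c 9 = 0).
Proof.
  induction m; intros g H0 H9.
  - s_jzS 0. s_jz0. apply leads_now. simpl. auto.
  - s_jzS (S (2 * m + 1)). s_jzS (2 * m + 1). s_jz0.
    eapply leads_trans. apply IHm; unfold upd; simpl; auto; lia.
    intros c (? & ? & ? & ?). apply leads_now. repeat split; auto.
Qed.

Lemma nth_tail n i : i < n -> nth_error (wprog n) (15 + i) = Some (Inc 2).
Proof.
  intros H. unfold wprog. rewrite nth_error_app2 by (simpl; lia). simpl (length Main).
  replace (15 + i - 15) with i by lia. rewrite nth_error_app1 by (rewrite repeat_length; auto).
  apply nth_error_repeat. auto.
Qed.

Lemma nth_fin n : nth_error (wprog n) (15 + n) = Some Fin.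
Proof.
  unfold wprog. rewrite nth_error_app2 by (simpl; lia). simpl (length Main).
  replace (15 + n - 15) with n by lia. rewrite nth_error_app2 by (rewrite repeat_length; auto).
  rewrite repeat_length, Nat.sub_diag. reflexivity.
Qed.

Lemma length_wprog n : length (wprog n) = 16 + n.
Proof. unfold wprog. rewrite !length_app, repeat_length. simpl. lia. Qed.

Lemma tail_run n j : forall i g, i + j = n ->
  leads (wprog n) (mkConfig (15 + i) g) (fun c => pc c = 15 + n /\ regs c 2 = g 2 + j /\
     regs c 0 = g 0 /\ regs c 3 = g 3 /\ regs c 4 = g 4 /\ regs c 9 = g 9).
Proof.
  induction j; intros i g Hij.
  - apply leads_now. simpl. repeat split; auto; lia.
  - apply leads_step. rewrite (step_nth _ _ (Inc 2)) by (apply nth_tail; simpl; lia). simpl.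
    replace (S (15 + i)) with (15 + S i) by lia.
    eapply leads_trans. apply (IHj (S i)); lia.
    intros c (? & ? & ? & ? & ? & ?). apply leads_now. unfold upd in *; simpl in *. repeat split; auto; lia.
Qed.

Fixpoint good (c x : nat) : bool :=
  match c with 0 => Nat.odd x | S c' => Nat.even x && negb (Nat.eqb x 0) && good c' (Nat.div2 x) end.

Lemma good_0 c : good c 0 = false.
Proof. destruct c; reflexivity. Qed.

Lemma C_lemma n c : forall g, g 2 = c -> g 3 = 0 -> g 4 = 0 -> g 9 = 0 ->
  (good c (g 0) = true -> leads (wprog n) (mkConfig 1 g) (fun c => halted (wprog n) c)) /\
  (good c (g 0) = false -> leads (wprog n) (mkConfig 1 g) (fun c => pc c = 14 /\ regs c 9 = 0)).
Proof.
  induction c; intros g H2 H3 H4 H9; destruct (Nat.Even_or_Odd (g 0)) as [[m Hm]|[m Hm]].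
  - simpl. assert (Nat.odd (g 0) = false). { rewrite Hm, <- Nat.negb_even, Nat.even_mul. reflexivity. }
    rewrite H. split; intros; try discriminate.
    s_jz0. apply parity_even with m; auto.
  - simpl. assert (Nat.odd (g 0) = true). { rewrite Hm, Nat.add_comm, Nat.odd_add_mul_2. reflexivity. }
    rewrite H. split; intros; try discriminate.
    s_jz0. eapply leads_trans. apply parity_odd with m; eauto.
    intros c1 (Hp & R2 & R3 & R9). destruct c1 as [pc1 g1]. simpl in *. subst pc1.
    s_inc. s_jz0.
    replace 15 with (15 + 0) by lia.
    eapply leads_trans. apply (tail_run n n 0); lia.
    intros c2 (Hp & ? & ? & R3' & ? & ?). destruct c2 as [pc2 g2]. simpl in *. subst pc2.
    apply leads_step. rewrite (step_nth _ _ Fin) by (apply nth_fin). simpl.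
    rewrite R3'. unfold upd; simpl. rewrite R3. rewrite H3. simpl.
    apply leads_now. unfold halted. rewrite length_wprog. simpl. lia.
  -
    assert (Hgood : good (S c) (g 0) = good c m).
    { simpl. rewrite Hm, Nat.div2_double, Nat.even_mul. simpl.
      destruct m; [rewrite good_0; auto | simpl; auto]. }
    rewrite Hgood.
    assert (Hgo : forall Q, (forall c', pc c' = 1 /\ regs c' 0 = m /\ regs c' 4 = 0 /\ regs c' 2 = c /\
               regs c' 3 = 0 /\ regs c' 9 = 0 -> leads (wprog n) c' Q) -> leads (wprog n) (mkConfig 1 g) Q).
    { intros Q HQ. s_jzS c. eapply leads_trans. apply (halve_even n m 0); unfold upd; simpl; auto; lia.
      intros c1 (Hp & R0 & R4 & R2 & R3 & R9). destruct c1 as [pc1 g1]. simpl in *. subst pc1.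
      eapply leads_trans. apply (move_loop n m 0); auto.
      intros c2 (Hp & S0 & S4 & S2 & S3 & S9). apply HQ. unfold upd in *; simpl in *.
      repeat split; auto; lia. }
    split; intros Hg.
    + apply Hgo. intros [pc1 g1] (Hp & R0 & R4 & R2 & R3 & R9). simpl in *. subst pc1.
      apply (IHc g1); auto. rewrite R0; auto.
    + apply Hgo. intros [pc1 g1] (Hp & R0 & R4 & R2 & R3 & R9). simpl in *. subst pc1.
      apply (IHc g1); auto. rewrite R0; auto.
  -
    assert (Hgood : good (S c) (g 0) = false).
    { simpl. rewrite Hm, Nat.add_comm, Nat.even_add_mul_2. reflexivity. }
    rewrite Hgood. split; intros; try discriminate.
    s_jzS c. apply halve_odd with m; unfold upd; simpl; auto.
Qed.

Lemma loop14 n g k : g 9 = 0 -> run (wprog n) k (mkConfig 14 g) = mkConfig 14 g.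
Proof.
  intros H. induction k; simpl; auto. erewrite st_jz0; eauto. reflexivity.
Qed.

Lemma wprog_start n x : leads (wprog n) (init x) (fun c => pc c = 1 /\ regs c 0 = x /\ regs c 2 = n /\
   regs c 3 = 0 /\ regs c 4 = 0 /\ regs c 9 = 0).
Proof.
  unfold init. s_jz0.
  replace 15 with (15 + 0) by lia.
  eapply leads_trans. apply (tail_run n n 0); lia.
  intros [pc2 g2] (Hp & R2 & R0 & R3 & R4 & R9). simpl in *. subst pc2.
  apply leads_step. rewrite (step_nth _ _ Fin) by (apply nth_fin). simpl.
  rewrite R3. apply leads_now. simpl. repeat split; auto.
Qed.

Lemma wprog_halts n x : good n x = true -> halts (encode (wprog n)) x.
Proof.
  intros Hg. unfold halts. rewrite prog_of_encode.
  assert (leads (wprog n) (init x) (fun c => halted (wprog n) c)).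
  { eapply leads_trans. apply wprog_start. intros [pc1 g1] (Hp & R0 & R2 & R3 & R4 & R9).
    simpl in *. subst pc1. apply (C_lemma n n g1); auto. rewrite R0; auto. }
  destruct H as [k Hk]. eauto.
Qed.

Lemma halts_good n x : halts (encode (wprog n)) x -> good n x = true.
Proof.
  unfold halts. rewrite prog_of_encode. intros [N HN].
  destruct (good n x) eqn:E; auto. exfalso.
  assert (leads (wprog n) (init x) (fun c => pc c = 14 /\ regs c 9 = 0)).
  { eapply leads_trans. apply wprog_start. intros [pc1 g1] (Hp & R0 & R2 & R3 & R4 & R9).
    simpl in *. subst pc1. apply (C_lemma n n g1); auto. rewrite R0; auto. }
  destruct H as [K [HK1 HK2]].
  destruct (run (wprog n) K (init x)) as [pcK gK] eqn:EK. simpl in HK1, HK2. subst pcK.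
  destruct (le_lt_dec N K).
  - assert (run (wprog n) K (init x) = run (wprog n) N (init x)).
    { replace K with (N + (K - N)) by lia. rewrite run_add, (run_halted _ (K - N)); auto. }
    rewrite EK in H. rewrite <- H in HN. unfold halted in HN. rewrite length_wprog in HN. simpl in HN. lia.
  - replace N with (K + (N - K)) in HN by lia. rewrite run_add, EK, loop14 in HN by auto.
    unfold halted in HN. rewrite length_wprog in HN. simpl in HN. lia.
Qed.

Lemma good_unique i : forall j x, good i x = true -> good j x = true -> i = j.
Proof.
  induction i; intros j x H1 H2; destruct j; simpl in *; auto.
  - apply andb_prop in H2. destruct H2 as [H2 _]. apply andb_prop in H2. destruct H2 as [H2 _].
    rewrite <- Nat.negb_even, H2 in H1. discriminate.
  - apply andb_prop in H1. destruct H1 as [H1 _]. apply andb_prop in H1. destruct H1 as [H1 _].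
    rewrite <- Nat.negb_even, H1 in H2. discriminate.
  - apply andb_prop in H1. destruct H1 as [_ H1]. apply andb_prop in H2. destruct H2 as [_ H2].
    f_equal. eauto.
Qed.

Lemma good_mult n k : good n (2 ^ n * (2 * k + 1)) = true.
Proof.
  induction n.
  - rewrite Nat.pow_0_r, Nat.mul_1_l. change (Nat.odd (2*k+1) = true).
    rewrite Nat.add_comm, Nat.odd_add_mul_2. reflexivity.
  - rewrite Nat.pow_succ_r', <- Nat.mul_assoc. set (y := 2 ^ n * (2 * k + 1)) in *.
    change (Nat.even (2*y) && negb (2*y =? 0) && good n (Nat.div2 (2*y)) = true).
    assert (Hp : y <> 0).
    { unfold y. apply Nat.neq_mul_0. split. apply Nat.pow_nonzero; lia. lia. }
    replace (2 * y =? 0) with false by (symmetry; apply Nat.eqb_neq; lia).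
    rewrite Nat.even_mul, Nat.div2_double, IHn. reflexivity.
Qed.

Lemma count_point X a b c : c < b -> X (a + c) = true -> count_below X a + 1 <= count_below X (a + b).
Proof.
  intros H1 H2. pose proof (count_mono X (S (a + c)) (a + b) ltac:(lia)).
  simpl in H. rewrite H2 in H. pose proof (count_mono X a (a + c) ltac:(lia)). lia.
Qed.

Lemma count_blocks X i K : (forall k, X (2 ^ i * (2 * k + 1)) = true) -> K <= count_below X (2 ^ (S i) * K).
Proof.
  intros H. induction K. lia.
  replace (2 ^ S i * S K) with (2 ^ S i * K + 2 ^ S i) by lia.
  assert (count_below X (2 ^ S i * K) + 1 <= count_below X (2 ^ S i * K + 2 ^ S i)).
  { apply count_point with (c := 2 ^ i). simpl. pose proof (Nat.pow_nonzero 2 i). lia.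
    replace (2 ^ S i * K + 2 ^ i) with (2 ^ i * (2 * K + 1)). apply H. simpl. lia. }
  lia.
Qed.

Lemma part1 (A : nat -> bool) : strongly_hhi A -> upper_density A <> Finite 1.
Proof.
  intros [Hinf Hno] Hd. apply Hno. exists (fun n => encode (wprog n)). split; [apply f_computable|split].
  - intros i j x Hij H1 H2. apply halts_good in H1, H2. apply Hij. eapply good_unique; eauto.
  - intros i. apply NNPP. intros Hnot.
    assert (Hna : forall k, negb (A (2 ^ i * (2 * k + 1))) = true).
    { intros k. destruct (A (2 ^ i * (2 * k + 1))) eqn:E; auto. exfalso. apply Hnot.
      exists (2 ^ i * (2 * k + 1)). split; auto. apply wprog_halts. apply good_mult. }
    set (P := 2 ^ S i). assert (HP : 0 < P) by (unfold P; pose proof (Nat.pow_nonzero 2 (S i)); lia).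
    unfold upper_density in Hd. destruct (ex_LimSup_seq (fun n => rho A (S n))) as [l Hl].
    rewrite (is_LimSup_seq_unique _ _ Hl) in Hd. subst l.
    assert (He : (0 < / (4 * INR P))%R) by (apply Rinv_0_lt_compat; apply lt_0_INR in HP; lra).
    destruct (Hl (mkposreal _ He)) as [Hl1 _]. destruct (Hl1 (2 * P)) as [n [Hn1 Hn2]]. simpl in Hn2.
    set (N := S n) in *.
    assert (HN : (0 < INR N)%R) by (apply lt_0_INR; unfold N; lia).
    unfold rho in Hn2.
    pose proof (count_compl A N) as Hcc.
    set (a := count_below A N) in *. set (b := count_below (fun x => negb (A x)) N) in *.
    assert (Hb : 4 * P * b < N).
    { assert (HPr : (0 < INR P)%R) by (apply lt_0_INR; lia).
      assert (H1 : (INR N - INR N / (4 * INR P) < INR a)%R).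
      { apply (Rmult_lt_compat_r (INR N)) in Hn2; auto. unfold Rdiv in *.
        rewrite Rmult_assoc, Rinv_l in Hn2 by lra. rewrite Rmult_1_r in Hn2.
        replace (INR N * / (4 * INR P))%R with (/ (4 * INR P) * INR N)%R by ring. lra. }
      apply (f_equal INR) in Hcc. rewrite plus_INR in Hcc.
      assert (H2 : (INR b < INR N / (4 * INR P))%R) by lra.
      apply (Rmult_lt_compat_r (4 * INR P)) in H2; [|lra].
      unfold Rdiv in H2. rewrite Rmult_assoc, Rinv_l in H2 by lra.
      apply INR_lt. rewrite !mult_INR. replace (INR 4) with 4%R by (simpl; lra). nra. }
    set (K := N / P).
    assert (HK1 : P * K <= N) by (unfold K; apply Nat.Div0.mul_div_le).
    assert (HK2 : N < P * (K + 1)).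
    { unfold K. pose proof (Nat.div_mod N P ltac:(lia)). pose proof (Nat.mod_upper_bound N P ltac:(lia)). nia. }
    pose proof (count_blocks (fun x => negb (A x)) i K Hna). fold P in H.
    pose proof (count_mono (fun x => negb (A x)) _ _ HK1). fold b in H0.
    assert (2 * P <= N) by (unfold N; lia).
    nia.
Qed.

Open Scope R_scope.

Theorem mainTheorem20 :
  (forall A : nat -> bool, strongly_hhi A -> upper_density A <> Finite 1) /\
  (forall eps : R, 0 < eps ->
     exists A : nat -> bool,
       strongly_hhi A /\ Rbar_le (Finite (1 - eps)) (upper_density A)).
Proof. split. apply part1. apply part2. Qed.
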